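(* Let $V$ be an $n$-dimensional complex vector space with orthonormal basis $e_1,\ldots,e_n$ for a nondegenerate symmetric bilinear form, let $a_{ij}=e_i\wedge e_j\in\Lambda_2(V)$, and $A=(a_{ij})_{1\le i,j\le n}\in\operatorname{Mat}_{n,n}(\Lambda(\Lambda_2(V)))$. Then for $l\ge 1$ we have $\operatorname{tr}(A^l)=0$ unless $l\equiv 3\pmod 4$.
   Context: $\Lambda(\Lambda_2(V))$ is the exterior algebra on $\Lambda_2(V)$; its products are exterior products, and matrix products are taken with entries multiplied in the order written. *)

(* Defs.v *)
From HB Require Import structures.
From mathcomp Require Import all_boot all_order all_algebra all_field.
Set Implicit Arguments. Unset Strict Implicit. Unset Printing Implicit Defensive.
Import GRing.Theory.
Local Open Scope ring_scope.

(* V = C^n with its standard (orthonormal) basis e_0..e_(n-1).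
   Basis of Lambda_2(V): e_i /\ e_j for i < j, indexed by [pair2 n]. *)
Definition pair2 (n : nat) := {p : 'I_n * 'I_n | (p.1 < p.2)%N}.

Definition pord n (p q : pair2 n) : bool := (enum_rank p < enum_rank q)%N.

(* The exterior algebra Lambda(Lambda_2(V)) over C (= algC): an element is the
   family of its coordinates on the basis monomials w_S = w_{s1} /\ ... /\ w_{sk},
   S = {s1 < ... < sk} a subset of the basis of Lambda_2(V). *)
Definition ext (n : nat) := {ffun {set pair2 n} -> algC}.

(* sign of the reordering of w_A /\ w_B into w_(A u B), A, B disjoint *)
Definition ext_sign n (A B : {set pair2 n}) : algC :=
  (-1) ^+ #|[set pq : pair2 n * pair2 n |
               [&& pq.1 \in A, pq.2 \in B & pord pq.2 pq.1]]|.

Definition ext_mul n (f g : ext n) : ext n :=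
  [ffun S : {set pair2 n} =>
     \sum_(A : {set pair2 n})
       \sum_(B : {set pair2 n} | (A :|: B == S) && [disjoint A & B])
         ext_sign A B * f A * g B].

Definition ext_gen n (p : pair2 n) : ext n :=
  [ffun S : {set pair2 n} => (S == [set p])%:R].

Definition a_entry n (i j : 'I_n) : ext n :=
  match ltnP i j with
  | LtnNotGeq h => ext_gen (exist _ (i, j) h)
  | GeqNotLtn _ =>
      match ltnP j i with
      | LtnNotGeq h' => - ext_gen (exist _ (j, i) h')
      | GeqNotLtn _ => 0
      end
  end.

Definition Amx n : 'M[ext n]_n := \matrix_(i, j) a_entry i j.

Definition ext_mxmul n (M N : 'M[ext n]_n) : 'M[ext n]_n :=
  \matrix_(i, j) \sum_(k < n) ext_mul (M i k) (N k j).

(* ext_mxpowS M k = M^(k+1) = (...((M * M) * M) ... ) * M *)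
Fixpoint ext_mxpowS n (M : 'M[ext n]_n) (k : nat) : 'M[ext n]_n :=
  match k with
  | O => M
  | k'.+1 => ext_mxmul (ext_mxpowS M k') M
  end.

Definition ext_tr n (M : 'M[ext n]_n) : ext n := \sum_(i < n) M i i.

(* Main.v *)
Require Import Defs.
From mathcomp Require Import all_boot all_order all_algebra all_field zify.
Import GRing.Theory.
Local Open Scope ring_scope.
Section S.
Variable n : nat.
Local Notation T := (pair2 n).
Local Notation E := {ffun {set T} -> algC^o}.
Lemma ffunZ (c : algC) (f : E) x : (c *: f) x = c * f x.
Proof. by rewrite /GRing.scale /= ffunE. Qed.
Definition mul (f g : E) : E := ext_mul f g.
Definition e (S : {set T}) : E := [ffun X => (X == S)%:R].

Lemma mulE f g S : mul f g S = \sum_A \sum_(B | (A :|: B == S) && [disjoint A & B])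
   ext_sign A B * f A * g B.
Proof. by rewrite /mul /ext_mul ffunE. Qed.

Lemma decomp (f : E) : f = \sum_A f A *: e A.
Proof.
apply/ffunP => S; rewrite sum_ffunE (bigD1 S) //= big1 => [|A /negbTE nA].
  by rewrite !(ffunZ, ffunE) eqxx addr0 /= mulr1.
by rewrite !(ffunZ, ffunE) eq_sym nA /= mulr0.
Qed.

Lemma xmulDl f1 f2 g : mul (f1 + f2) g = mul f1 g + mul f2 g.
Proof.
apply/ffunP => S; rewrite !mulE ffunE !mulE -big_split; apply: eq_bigr => A _.
rewrite -big_split; apply: eq_bigr => B _; rewrite ffunE /=.
by rewrite mulrDr mulrDl.
Qed.
Lemma xmulDr f g1 g2 : mul f (g1 + g2) = mul f g1 + mul f g2.
Proof.
apply/ffunP => S; rewrite !mulE ffunE !mulE -big_split; apply: eq_bigr => A _.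
rewrite -big_split; apply: eq_bigr => B _; rewrite ffunE /=.
by rewrite mulrDr.
Qed.
Lemma xmul0l g : mul 0 g = 0.
Proof.
apply/ffunP => S; rewrite mulE ffunE big1 // => A _; rewrite big1 // => B _.
by rewrite ffunE mulr0 mul0r.
Qed.
Lemma xmul0r g : mul g 0 = 0.
Proof.
apply/ffunP => S; rewrite mulE ffunE big1 // => A _; rewrite big1 // => B _.
by rewrite ffunE mulr0.
Qed.
Lemma xmulZl (c : algC) f g : mul (c *: f) g = c *: mul f g.
Proof.
apply/ffunP => S; rewrite ffunZ !mulE /= mulr_sumr; apply: eq_bigr => A _.
rewrite mulr_sumr; apply: eq_bigr => B _; rewrite ffunZ /=.
by rewrite !mulrA [_ * c]mulrC.
Qed.
Lemma xmulZr (c : algC) f g : mul f (c *: g) = c *: mul f g.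
Proof.
apply/ffunP => S; rewrite ffunZ !mulE /= mulr_sumr; apply: eq_bigr => A _.
rewrite mulr_sumr; apply: eq_bigr => B _; rewrite ffunZ /=.
by rewrite mulrA [_ * c]mulrC !mulrA.
Qed.
Lemma xmul_suml I (r : seq I) (P : pred I) (F : I -> E) g :
  mul (\sum_(i <- r | P i) F i) g = \sum_(i <- r | P i) mul (F i) g.
Proof. exact: (big_morph (fun x => mul x g) (fun x y => xmulDl x y g) (xmul0l g)). Qed.
Lemma xmul_sumr I (r : seq I) (P : pred I) (F : I -> E) g :
  mul g (\sum_(i <- r | P i) F i) = \sum_(i <- r | P i) mul g (F i).
Proof. exact: (big_morph (fun x => mul g x) (fun x y => xmulDr g x y) (xmul0r g)). Qed.
Lemma xmulNl f g : mul (- f) g = - mul f g.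
Proof. by rewrite -scaleN1r xmulZl scaleN1r. Qed.
Lemma xmulNr f g : mul f (- g) = - mul f g.
Proof. by rewrite -scaleN1r xmulZr scaleN1r. Qed.

Lemma mul_e A B : mul (e A) (e B) =
  if [disjoint A & B] then ext_sign A B *: e (A :|: B) else 0.
Proof.
apply/ffunP => S; rewrite mulE (bigD1 A) //= [X in _ + X]big1 => [|X nX]; last first.
  by rewrite big1 // => Y _; rewrite !ffunE (negbTE nX) mulr0 mul0r.
rewrite addr0 big_mkcond (bigD1 B) //= [X in _ + X]big1 => [|Y nY]; last first.
  by case: ifP => //; rewrite !ffunE (negbTE nY) eqxx mulr0.
rewrite addr0 !ffunE !eqxx /=.
case D: [disjoint A & B]; rewrite ?andbT ?andbF ?ffunZ ?ffunE /=; last by [].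
by rewrite eq_sym; case: eqP => _; rewrite /= ?mulr1 ?mulr0.
Qed.

Definition cnt (A B : {set T}) :=
  #|[set pq : T * T | [&& pq.1 \in A, pq.2 \in B & pord pq.2 pq.1]]|.

Lemma cntE (A B : {set T}) : cnt A B = (\sum_(a in A) \sum_(b in B) (pord b a : nat))%N.
Proof.
rewrite /cnt -sum1_card.
transitivity (\sum_(p : T * T) ([&& p.1 \in A, p.2 \in B & pord p.2 p.1] : nat))%N.
  rewrite big_mkcond; apply: eq_bigr => p _; rewrite inE.
  by case: [&& _, _ & _].
rewrite -(pair_bigA _ (fun a b => ([&& a \in A, b \in B & pord b a] : nat))) /=.
rewrite [RHS]big_mkcond; apply: eq_bigr => a _.
case: (a \in A) => /=; last by rewrite big1.
by rewrite [RHS]big_mkcond; apply: eq_bigr => b _; case: (b \in B).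
Qed.

Lemma sumU (F : T -> nat) (A B : {set T}) : [disjoint A & B] ->
  (\sum_(i in A :|: B) F i = \sum_(i in A) F i + \sum_(i in B) F i)%N.
Proof. by move=> D; rewrite -bigU //; apply: eq_bigl => i; rewrite !inE. Qed.

Lemma disjUl (A B C : {set T}) :
  [disjoint A :|: B & C] = [disjoint A & C] && [disjoint B & C].
Proof. by rewrite -!setI_eq0 setIUl setU_eq0. Qed.
Lemma disjUr (A B C : {set T}) :
  [disjoint A & B :|: C] = [disjoint A & B] && [disjoint A & C].
Proof. by rewrite -!setI_eq0 setIUr setU_eq0. Qed.

Lemma cntUl (A B C : {set T}) : [disjoint A & B] -> cnt (A :|: B) C = (cnt A C + cnt B C)%N.
Proof. by move=> D; rewrite !cntE sumU. Qed.
Lemma cntUr (A B C : {set T}) : [disjoint B & C] -> cnt A (B :|: C) = (cnt A B + cnt A C)%N.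
Proof.
by move=> D; rewrite !cntE -big_split; apply: eq_bigr => a _; rewrite sumU.
Qed.

Lemma pord_tot (a b : T) : a != b -> (pord b a + pord a b = 1)%N.
Proof.
move=> nab; rewrite /pord.
have : (enum_rank a : nat) != enum_rank b.
  by rewrite (inj_eq val_inj) (inj_eq enum_rank_inj).
case: (ltngtP (enum_rank a) (enum_rank b)) => //= ->; by rewrite eqxx.
Qed.

Lemma cnt_swap (A B : {set T}) : [disjoint A & B] -> (cnt A B + cnt B A = #|A| * #|B|)%N.
Proof.
move=> D; rewrite !cntE [X in (_ + X)%N]exchange_big /= -big_split /=.
rewrite -sum_nat_const; apply: eq_bigr => a Ha.
rewrite -big_split -sum1_card /=; apply: eq_bigr => b Hb.
apply: pord_tot; apply/eqP => ab; subst b.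
by rewrite (disjointFr D Ha) in Hb.
Qed.

Lemma signE (A B : {set T}) : ext_sign A B = (-1) ^+ cnt A B.
Proof. by []. Qed.

Lemma sign_assoc (A B C : {set T}) : [disjoint A & B] -> [disjoint A & C] -> [disjoint B & C] ->
  ext_sign A B * ext_sign (A :|: B) C = ext_sign B C * ext_sign A (B :|: C).
Proof.
move=> dAB dAC dBC; rewrite !signE cntUl // cntUr // -!exprD.
by congr (_ ^+ _); rewrite [RHS]addnCA [(cnt B C + _)%N]addnC.
Qed.

Lemma sign_comm (A B : {set T}) : [disjoint A & B] ->
  ext_sign A B = (-1) ^+ (#|A| * #|B|) * ext_sign B A.
Proof.
move=> D; rewrite !signE -cnt_swap // -!exprD -addnA addnn -mul2n exprD exprM (_ : (-1) ^+ 2 = 1) ?expr1n ?mulr1 //; last by rewrite expr2 mulrNN mulr1.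
Qed.

Lemma mul_e_assoc A B C : mul (mul (e A) (e B)) (e C) = mul (e A) (mul (e B) (e C)).
Proof.
rewrite !mul_e.
case dAB: [disjoint A & B]; case dBC: [disjoint B & C];
  rewrite ?xmul0l ?xmul0r ?xmulZl ?xmulZr ?mul_e ?disjUl ?disjUr ?dAB ?dBC ?andbF /= ?scaler0 //.
case dAC: [disjoint A & C]; rewrite /= ?scaler0 //.
by rewrite !scalerA setUA sign_assoc.
Qed.

Lemma mul_e_comm A B : mul (e A) (e B) = (-1) ^+ (#|A| * #|B|) *: mul (e B) (e A).
Proof.
rewrite !mul_e disjoint_sym; case: ifP => D; last by rewrite scaler0.
by rewrite scalerA -sign_comm 1?disjoint_sym // setUC.
Qed.

Lemma mul_sum2 (F G : {set T} -> E) :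
  mul (\sum_A F A) (\sum_B G B) = \sum_A \sum_B mul (F A) (G B).
Proof. by rewrite xmul_suml; apply: eq_bigr => A _; rewrite xmul_sumr. Qed.

Lemma mul_assoc f g h : mul (mul f g) h = mul f (mul g h).
Proof.
rewrite (decomp f) (decomp g) (decomp h) !mul_sum2.
apply: eq_bigr => A _.
under eq_bigr => C _ do rewrite xmul_suml.
under [RHS]eq_bigr => B _ do rewrite xmul_sumr.
rewrite exchange_big; apply: eq_bigr => B _; apply: eq_bigr => C _.
rewrite !(xmulZl, xmulZr) mul_e_assoc !scalerA; congr (_ *: _); by rewrite [RHS]mulrC mulrA.
Qed.

Definition hom (k : nat) (f : E) := forall S : {set T}, #|S| != k -> f S = 0.

Lemma mul_comm p q f g : hom p f -> hom q g -> mul f g = (-1) ^+ (p * q) *: mul g f.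
Proof.
move=> hf hg; rewrite (decomp f) (decomp g) !mul_sum2 exchange_big scaler_sumr.
apply: eq_bigr => B _; rewrite scaler_sumr; apply: eq_bigr => A _.
have [/eqP pA|/hf ->] := boolP (#|A| == p); last by rewrite !scale0r xmul0l xmul0r scaler0.
have [/eqP qB|/hg ->] := boolP (#|B| == q); last by rewrite !scale0r xmul0l xmul0r scaler0.
by rewrite !(xmulZl, xmulZr) mul_e_comm pA qB !scalerA mulrC [_ * f A]mulrC.
Qed.

Lemma hom_mul p q f g : hom p f -> hom q g -> hom (p + q) (mul f g).
Proof.
move=> hf hg S nS; rewrite mulE big1 // => A _; rewrite big1 // => B /andP[/eqP U D].
have [/eqP pA|/hf ->] := boolP (#|A| == p); last by rewrite mulr0 mul0r.
have [/eqP qB|/hg ->] := boolP (#|B| == q); last by rewrite mulr0.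
by move: nS; rewrite -U cardsU (_ : A :&: B = set0) ?cards0 ?subn0 ?pA ?qB ?eqxx //;
  apply/eqP; rewrite setI_eq0.
Qed.

Lemma hom0 k : hom k 0.
Proof. by move=> S _; rewrite ffunE. Qed.
Lemma homD k f g : hom k f -> hom k g -> hom k (f + g).
Proof. by move=> hf hg S nS; rewrite ffunE hf ?hg ?addr0. Qed.
Lemma homN k f : hom k f -> hom k (- f).
Proof. by move=> hf S nS; rewrite ffunE hf ?oppr0. Qed.
Lemma homZ k c f : hom k f -> hom k (c *: f).
Proof. by move=> hf S nS; rewrite ffunZ hf ?mulr0. Qed.
Lemma hom_sum k I (r : seq I) (P : pred I) (F : I -> E) :
  (forall i, P i -> hom k (F i)) -> hom k (\sum_(i <- r | P i) F i).
Proof.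
move=> h; elim/big_ind: _ => //; [exact: hom0 | by move=> x y; apply: homD].
Qed.

Definition Am : 'M[E]_n := Amx n.
Definition pw k : 'M[E]_n := ext_mxpowS (Amx n) k.
Definition mxm (M N : 'M[E]_n) : 'M[E]_n := ext_mxmul M N.
Definition tr (M : 'M[E]_n) : E := \sum_i M i i.

Lemma mxmE M N i j : mxm M N i j = \sum_(k < n) mul (M i k) (N k j).
Proof. by rewrite /mxm /ext_mxmul mxE. Qed.
Lemma pwS k : pw k.+1 = mxm (pw k) Am.
Proof. by []. Qed.
Lemma pw0 : pw 0 = Am.
Proof. by []. Qed.

Lemma mxm_assoc X Y Z : mxm (mxm X Y) Z = mxm X (mxm Y Z).
Proof.
apply/matrixP => i j; rewrite !mxmE.
under eq_bigr => k _ do rewrite mxmE xmul_suml.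
under [RHS]eq_bigr => m _ do rewrite mxmE xmul_sumr.
rewrite exchange_big; apply: eq_bigr => m _; apply: eq_bigr => k _.
exact: mul_assoc.
Qed.

Lemma pw_comm k : mxm Am (pw k) = pw k.+1.
Proof.
elim: k => [|k IH]; first by [].
by rewrite [in LHS]pwS -mxm_assoc IH.
Qed.

Lemma hom_gen (p : T) : hom 1 (ext_gen p).
Proof.
move=> S nS; rewrite ffunE; case: eqP => // SE.
by rewrite SE cards1 in nS.
Qed.

Lemma hom_A i j : hom 1 (Am i j).
Proof.
rewrite /Am /Amx mxE /a_entry.
case: (ltnP i j) => h1; first exact: hom_gen.
case: (ltnP j i) => h2; first exact/homN/hom_gen.
exact: hom0.
Qed.

Lemma A_anti i j : Am j i = - Am i j.
Proof.
rewrite /Am /Amx !mxE /a_entry.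
case: (ltnP i j) => h1; case: (ltnP j i) => h2 //; rewrite ?opprK ?oppr0 //.
- by have := ltn_trans h1 h2; rewrite ltnn.
Qed.

Lemma hom_pw k i j : hom k.+1 (pw k i j).
Proof.
elim: k i j => [|k IH] i j; first exact: hom_A.
rewrite pwS mxmE; apply: hom_sum => m _.
rewrite -addn1; exact: hom_mul (IH _ _) (hom_A _ _).
Qed.

Fixpoint sg k : algC := if k is k'.+1 then (-1) ^+ k' * sg k' else -1.

Lemma pw_T k i j : pw k j i = sg k *: pw k i j.
Proof.
elim: k i j => [|k IH] i j.
  by rewrite pw0 A_anti /= scaleN1r.
rewrite {1}pwS -pw_comm !mxmE scaler_sumr; apply: eq_bigr => m _.
rewrite (@mul_comm _ _ _ _ (hom_pw k j m) (hom_A m i)) A_anti IH xmulNl xmulZr scalerN.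
rewrite scalerA -scaleNr; congr (_ *: _) => /=.
by rewrite muln1 exprS mulN1r mulNr opprK.
Qed.

Lemma tr_swap p q (X Y : 'M[E]_n) : (forall i j, hom p (X i j)) -> (forall i j, hom q (Y i j)) ->
  tr (mxm X Y) = (-1) ^+ (p * q) *: tr (mxm Y X).
Proof.
move=> hX hY; rewrite /tr.
under eq_bigr => i _ do rewrite mxmE.
under [in RHS]eq_bigr => i _ do rewrite mxmE.
rewrite [in RHS]exchange_big scaler_sumr; apply: eq_bigr => i _.
rewrite scaler_sumr; apply: eq_bigr => k _.
exact: mul_comm.
Qed.

Local Arguments GRing.exp : simpl never.
Lemma sgS k : sg k.+1 = (-1) ^+ k * sg k.
Proof. by []. Qed.

Lemma sg2 x : sg x.+2 = - sg x.
Proof.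
rewrite [sg x.+2]sgS [sg x.+1]sgS mulrA -exprD -signr_odd addSn addnn /=.
by rewrite odd_double /= mulN1r.
Qed.

Lemma sg4 x : sg x.+4 = sg x.
Proof. by rewrite !sg2 opprK.
Qed.

Lemma sg_mod k : sg k = sg (k %% 4).
Proof.
rewrite {1}(divn_eq k 4); elim: (k %/ 4)%N => [|q IH]; first by rewrite mul0n add0n.
by rewrite mulSn -addnA [(4 + _)%N]addnC addn4 sg4.
Qed.

Lemma self_opp (x : E) : x = - x -> x = 0.
Proof.
move=> h; apply/ffunP => S; rewrite ffunE.
have := congr1 (fun f : E => f S) h; rewrite ffunE.
move: (x S) => c hc.
have : (c : algC) *+ 2 = 0 by rewrite mulr2n {1}hc addNr.
by move/eqP; rewrite Num.Theory.mulrn_eq0 /= => /eqP.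
Qed.
End S.

Theorem proposition4p4 (n l : nat) :
  (1 <= l)%N -> (l %% 4 != 3)%N ->
  ext_tr (ext_mxpowS (Amx n) l.-1) = 0.
Proof.
move=> l1 l3.
change (tr n (pw n l.-1) = 0); apply: self_opp.
case: (boolP (odd l)) => ol.
  have k0 : (l.-1 %% 4 = 0)%N by lia.
  have h : tr n (pw n l.-1) = sg l.-1 *: tr n (pw n l.-1).
    by rewrite /tr scaler_sumr; apply: eq_bigr => i _; exact: pw_T.
  by rewrite sg_mod k0 /= scaleN1r in h.
case: l l1 l3 ol => [|[|k]] //= _ _ ok.
have h : tr n (pw n k.+1) = (-1) ^+ (k.+1 * 1) *: tr n (pw n k.+1).
  by rewrite [in LHS]pwS [in LHS](@tr_swap n _ _ _ _ (@hom_pw n k) (@hom_A n)) pw_comm.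
rewrite negbK in ok.
by rewrite muln1 -signr_odd /= (negbTE ok) /= expr1 scaleN1r in h.
Qed.
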